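(* For all integers $0\le k\le j$, $$\sum_{h=k}^j(-q)^ha^hq^{k^2-2jh}{h\brack k}_+\,a^{-j+h}q^{(j-h)^2}{j\brack h}_+\frac{(a^2q^{2-2j};q^2)_{j-h}}{(q^2;q^2)_{j-h}}=(-q)^ka^{2k-j}q^{-4kj+2k^2+j^2}{j\brack k}_+\frac{(a^2q^{2-4j+2k};q^2)_{j-k}}{(q^2;q^2)_{j-k}}.$$
   Context: $(x;q^2)_n=\prod_{i=0}^{n-1}(1-xq^{2i})$, $(q^2;q^2)_n=\prod_{i=1}^n(1-q^{2i})$, and ${N\brack k}_+=\frac{(q^2;q^2)_N}{(q^2;q^2)_k(q^2;q^2)_{N-k}}$. (The identity expresses the reduced North–South closure of a top twist applied to the basis web $RI[j,k]$.) *)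

(* Defs.v *)
From HB Require Import structures.
From mathcomp Require Import all_boot all_order all_algebra.
Set Implicit Arguments. Unset Strict Implicit. Unset Printing Implicit Defensive.
Import Order.TTheory GRing.Theory Num.Theory.
Local Open Scope ring_scope.

Definition qpoch (F : fieldType) (x q : F) (n : nat) : F :=
  \prod_(i < n) (1 - x * q ^+ (2 * i)).

Definition qfac (F : fieldType) (q : F) (n : nat) : F :=
  \prod_(i < n) (1 - q ^+ (2 * i.+1)).

Definition qbin (F : fieldType) (q : F) (N k : nat) : F :=
  qfac q N / (qfac q k * qfac q (N - k)).

(* Main.v *)
Require Import Defs.
From HB Require Import structures.
From mathcomp Require Import all_boot all_order all_algebra.
From mathcomp Require Import ring lra zify.
Import Order.TTheory GRing.Theory Num.Theory.
Local Open Scope ring_scope.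

Section QB.
Variable F : fieldType.
Implicit Types (q x a b : F).

Fixpoint qb q (n m : nat) : F :=
  match n, m with
  | _, 0 => 1
  | 0, _.+1 => 0
  | n'.+1, m'.+1 => q ^+ (2 * m'.+1) * qb q n' m'.+1 + qb q n' m'
  end.

Lemma qb_n0 q n : qb q n 0 = 1. Proof. by case: n. Qed.

Lemma qb_gt q n m : (n < m)%N -> qb q n m = 0.
Proof.
elim: n m => [|n IH] [|m] //= H.
by rewrite !IH ?mulr0 ?addr0 // ltnW.
Qed.

Lemma qfacS q n : qfac q n.+1 = qfac q n * (1 - q ^+ (2 * n.+1)).
Proof. by rewrite /qfac big_ord_recr. Qed.

Lemma qfac0 q : qfac q 0 = 1.
Proof. by rewrite /qfac big_ord0. Qed.

Lemma qb_qfac q n m : (m <= n)%N -> qb q n m * qfac q m * qfac q (n - m) = qfac q n.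
Proof.
elim: n m => [|n IH] [|m] H //=.
- by rewrite subn0 qfac0 !mul1r.
- by rewrite subn0 qfac0 !mul1r.
- rewrite subSS.
  have [Hmn|Hmn] := ltnP m n.
  + have E : (n - m = (n - m.+1).+1)%N by lia.
    set e := (2 * (n - m.+1).+1)%N.
    have -> : (q ^+ (2 * m.+1) * qb q n m.+1 + qb q n m) * qfac q m.+1 * qfac q (n - m)
      = q ^+ (2 * m.+1) * (qb q n m.+1 * qfac q m.+1 * qfac q (n - m.+1)) * (1 - q ^+ e)
        + (qb q n m * qfac q m * qfac q (n - m)) * (1 - q ^+ (2 * m.+1)).
      by rewrite (qfacS q m) E (qfacS q (n - m.+1)); ring.
    rewrite (IH m.+1 Hmn) (IH m (ltnW Hmn)) qfacS.
    have -> : (2 * n.+1 = 2 * m.+1 + e)%N by rewrite /e; lia.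
    rewrite exprD; ring.
  + have E : m = n by lia. subst m.
    rewrite (@qb_gt q n n.+1) // mulr0 add0r subnn qfac0 mulr1 qfacS.
    have := IH n (leqnn n); rewrite subnn qfac0 mulr1 => E.
    rewrite -[in RHS]E; ring.
Qed.

Lemma qpochS q x n : qpoch x q n.+1 = (1 - x) * qpoch (x * q ^+ 2) q n.
Proof.
rewrite /qpoch big_ord_recl /= muln0 expr0 mulr1; congr (_ * _).
apply: eq_bigr => i _; rewrite /bump /= -mulrA -exprD; congr (1 - x * q ^+ _); lia.
Qed.

Lemma qpoch0 q x : qpoch x q 0 = 1.
Proof. by rewrite /qpoch big_ord0. Qed.

Lemma qvand q n : forall a b, qpoch (a * b) q n =
  \sum_(m < n.+1) qb q n m * b ^+ m * qpoch a q m * qpoch b q (n - m).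
Proof.
elim: n => [|n IH] a b.
  by rewrite big_ord1 /= !qpoch0 expr0 !mulr1.
rewrite big_ord_recl /= ?qb_n0 expr0 !mulr1 qpoch0 mulr1 subn0.
under eq_bigr => i _ do rewrite /= /bump /= add1n subSS mulrDl mulrDl mulrDl.
rewrite big_split /=.
have E2 : \sum_(i < n.+1) qb q n i * b ^+ i.+1 * qpoch a q i.+1 * qpoch b q (n - i)
   = b * (1 - a) * qpoch (a * q ^+ 2 * b) q n.
  rewrite (IH (a * q ^+ 2) b) mulr_sumr; apply: eq_bigr => i _.
  rewrite qpochS exprS; ring.
rewrite E2.
have E1 : qpoch b q n.+1 + \sum_(i < n.+1) q ^+ (2 * i.+1) * qb q n i.+1 * b ^+ i.+1 *
     qpoch a q i.+1 * qpoch b q (n - i)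
   = (1 - b) * qpoch (a * (b * q ^+ 2)) q n.
  rewrite (IH a (b * q ^+ 2)) mulr_sumr.
  have -> : qpoch b q n.+1 + \sum_(i < n.+1) q ^+ (2 * i.+1) * qb q n i.+1 * b ^+ i.+1 *
     qpoch a q i.+1 * qpoch b q (n - i) = \sum_(i < n.+2)
     q ^+ (2 * i) * qb q n i * b ^+ i * qpoch a q i * qpoch b q (n.+1 - i).
    rewrite [RHS]big_ord_recl /= ?muln0 ?expr0 ?qb_n0 ?expr0 ?qpoch0 ?mul1r ?mulr1 ?subn0.
    by congr (_ + _); apply: eq_bigr => i _; rewrite /bump /= add1n subSS.
  rewrite big_ord_recr /= qb_gt // !mulr0 !mul0r addr0.
  apply: eq_bigr => i _.
  have Hi : (n.+1 - i = (n - i).+1)%N by have := ltn_ord i; lia.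
  rewrite Hi qpochS exprMn -exprM; ring.
rewrite mul1r; under eq_bigr => i _ do rewrite add0n. rewrite addrA E1 qpochS.
have -> : a * b * q ^+ 2 = a * (b * q ^+ 2) by ring.
have -> : a * q ^+ 2 * b = a * (b * q ^+ 2) by ring.
ring.
Qed.

Lemma qpochSr q x n : qpoch x q n.+1 = qpoch x q n * (1 - x * q ^+ (2 * n)).
Proof. by rewrite /qpoch big_ord_recr. Qed.

Lemma qpochN q n i : q != 0 -> (i <= n)%N ->
  qpoch (q ^ (- (2 * n)%:Z)) q i * qfac q (n - i)
  = (-1) ^+ i * q ^ ((i * i)%:Z - i%:Z - (2 * n * i)%:Z) * qfac q n.
Proof.
move=> hq; elim: i => [|i IH] Hi.
  rewrite qpoch0 subn0 expr0 !mul1r.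
  have -> : (((0 * 0)%:Z - 0%:Z - (2 * n * 0)%:Z) = 0 :> int) by lia.
  by rewrite expr0z mul1r.
have Hd : (n - i = (n - i.+1).+1)%N by lia.
set d := (n - i.+1).+1.
set w := q ^ (- (2 * d)%:Z).
have E1 : q ^ (- (2 * n)%:Z) * q ^+ (2 * i) = w.
  rewrite exprnP -expfzDr //. congr (_ ^ _); rewrite /d; lia.
have E2 : w * q ^+ (2 * d) = 1.
  rewrite exprnP -expfzDr // -(expr0z q); congr (_ ^ _); lia.
have E3 : q ^ (((i.+1) * (i.+1))%:Z - (i.+1)%:Z - (2 * n * i.+1)%:Z)
   = w * q ^ ((i * i)%:Z - i%:Z - (2 * n * i)%:Z).
  rewrite -expfzDr //; congr (_ ^ _); rewrite /d; lia.
have := IH (ltnW Hi); rewrite Hd qfacS -/d => IH'.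
rewrite qpochSr E1 E3 exprS.
have -> : 1 - w = - w * (1 - q ^+ (2 * d)) by rewrite mulNr mulrBr mulr1 E2; ring.
have -> : qpoch (q ^ (- (2 * n)%:Z)) q i * (- w * (1 - q ^+ (2 * d))) * qfac q (n - i.+1)
  = - w * (qpoch (q ^ (- (2 * n)%:Z)) q i * (qfac q (n - i.+1) * (1 - q ^+ (2 * d)))) by ring.
rewrite IH'; ring.
Qed.
End QB.

Ltac fs := field; repeat match goal with |- is_true (_ && _) => apply/andP; split end; try assumption.

Theorem mainTheorem8 (F : fieldType) (a q : F) (k j : nat)
  (ha : a != 0) (hq : q != 0)
  (hqfac : forall n : nat, (n <= j)%N -> qfac q n != 0)
  (hkj : (k <= j)%N) :
  \sum_(k <= h < j.+1)
     ((- q) ^+ h * a ^+ h * q ^ ((k ^ 2)%:Z - (2 * j * h)%:Z) * qbin q h k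
      * a ^ (h%:Z - j%:Z) * q ^+ ((j - h) ^ 2) * qbin q j h
      * (qpoch (a ^+ 2 * q ^ (2%:Z - (2 * j)%:Z)) q (j - h) / qfac q (j - h)))
  = (- q) ^+ k * a ^ ((2 * k)%:Z - j%:Z)
      * q ^ (- (4 * k * j)%:Z + (2 * k ^ 2)%:Z + (j ^ 2)%:Z) * qbin q j k
      * (qpoch (a ^+ 2 * q ^ (2%:Z - (4 * j)%:Z + (2 * k)%:Z)) q (j - k)
         / qfac q (j - k)).
Proof.
have [n Hj] : exists n, j = (k + n)%N by exists (j - k)%N; rewrite subnKC.
subst j.
set b := a ^+ 2 * q ^ (2%:Z - (2 * (k + n))%:Z).
have Harg : a ^+ 2 * q ^ (2%:Z - (4 * (k + n))%:Z + (2 * k)%:Z) = q ^ (- (2 * n)%:Z) * b.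
  rewrite /b mulrCA -expfzDr //; congr (_ * _ ^ _); lia.
rewrite Harg qvand addKn.
rewrite (big_addn 0 _ k).
have -> : ((k + n).+1 - k = n.+1)%N by lia.
rewrite big_mkord.
rewrite mulr_suml mulr_sumr.
apply: eq_bigr => [[i Hi]] _ /=.
have [t Ht] : exists t, n = (i + t)%N by exists (n - i)%N; rewrite subnKC //; lia.
subst n.
have E1 : (k + (i + t) - (i + k) = t)%N by lia.
have E2 : (i + t - i = t)%N by lia.
have E3 : (i + k - k = i)%N by lia.
have E4 : (k + (i + t) - k = i + t)%N by lia.
have nz : forall m, (m <= k + (i + t))%N -> qfac q m != 0 by [].
have nt := nz t ltac:(lia).
have ni := nz i ltac:(lia).
have nk := nz k ltac:(lia).
have nik := nz (i + k)%N ltac:(lia).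
have nit := nz (i + t)%N ltac:(lia).
have HN := @qpochN F q (i + t) i hq (leq_addr t i); rewrite E2 in HN.
have HN' : qpoch (q ^ (- (2 * (i + t))%:Z)) q i
    = (-1) ^+ i * q ^ ((i * i)%:Z - i%:Z - (2 * (i + t) * i)%:Z) * qfac q (i + t) / qfac q t.
  by rewrite -HN; fs.
have HB : qb F q (i + t) i = qfac q (i + t) / (qfac q i * qfac q t).
  rewrite -(@qb_qfac F q (i + t) i (leq_addr t i)) E2; fs.
rewrite E1 E2 HN' HB /qbin E1 E3 E4.
set ZL := ((i + k)%:Z + (k ^ 2)%:Z - (2 * (k + (i + t)) * (i + k))%:Z + (t ^ 2)%:Z).
set WL := ((i + k)%:Z + (i + k)%:Z - (k + (i + t))%:Z).
have HL : (- q) ^+ (i + k) * a ^+ (i + k) * q ^ ((k ^ 2)%:Z - (2 * (k + (i + t)) * (i + k))%:Z)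
   * a ^ ((i + k)%:Z - (k + (i + t))%:Z) * q ^+ (t ^ 2) = (-1) ^+ (i + k) * q ^ ZL * a ^ WL.
  have e1 : q ^ ZL = q ^+ (i + k) * q ^ ((k ^ 2)%:Z - (2 * (k + (i + t)) * (i + k))%:Z) * q ^+ (t ^ 2).
    by rewrite !exprnP -!expfzDr //; congr (_ ^ _); rewrite /ZL; lia.
  have e2 : a ^ WL = a ^+ (i + k) * a ^ ((i + k)%:Z - (k + (i + t))%:Z).
    by rewrite !exprnP -!expfzDr //; congr (_ ^ _); rewrite /WL; lia.
  by rewrite e1 e2 (exprNn q); ring.
set z := (2%:Z - (2 * (k + (i + t)))%:Z).
set S := ((i * i)%:Z - i%:Z - (2 * (i + t) * i)%:Z).
set W2 := ((2 * k)%:Z - (k + (i + t))%:Z).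
set Z2 := (- (4 * k * (k + (i + t)))%:Z + (2 * k ^ 2)%:Z + ((k + (i + t)) ^ 2)%:Z).
have HR : (- q) ^+ k * a ^ W2 * q ^ Z2 * b ^+ i * ((-1) ^+ i * q ^ S)
   = (-1) ^+ (i + k) * q ^ ZL * a ^ WL.
  have eb : b ^+ i = a ^+ (2 * i) * q ^ (z * i%:Z).
    by rewrite /b exprMn -exprM (exprnP (q ^ _) i) exprz_exp.
  have e1 : q ^ ZL = q ^+ k * q ^ Z2 * q ^ (z * i%:Z) * q ^ S.
    by rewrite !exprnP -!expfzDr //; congr (_ ^ _); rewrite /ZL /Z2 /z /S; lia.
  have e2 : a ^ WL = a ^ W2 * a ^+ (2 * i).
    by rewrite !exprnP -!expfzDr //; congr (_ ^ _); rewrite /WL /W2; lia.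
  by rewrite eb e1 e2 (exprNn q) (exprD (-1)); ring.
transitivity (((- q) ^+ (i + k) * a ^+ (i + k) * q ^ ((k ^ 2)%:Z - (2 * (k + (i + t)) * (i + k))%:Z)
   * a ^ ((i + k)%:Z - (k + (i + t))%:Z) * q ^+ (t ^ 2)) *
   (qfac q (i + k) / (qfac q k * qfac q i) * (qfac q (k + (i + t)) / (qfac q (i + k) * qfac q t))
    * (qpoch b q t / qfac q t))).
  by fs.
rewrite HL -HR; fs.
Qed.
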